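(* Let $\{w^k\}$ be generated by the L-GADMM iteration and $\{\bar w^k\}$ be the auxiliary sequence. Then for every $k\ge0$ and every $w^*\in\mathcal{W}^*$, $$\|w^{k+1}-w^*\|_H^2\le\|w^k-w^*\|_H^2-\|w^k-\bar w^k\|_N^2.$$
   Context: Standing setting. Let $m\ge 2$, $\ell$, $n_1,\dots,n_m$ be positive integers. For $i=1,\dots,m$ let $\theta_i:\mathbb{R}^{n_i}\to\mathbb{R}$ be convex, $\mathcal{X}_i\subseteq\mathbb{R}^{n_i}$ nonempty closed convex, $A_i\in\mathbb{R}^{\ell\times n_i}$ of full column rank, and $b\in\mathbb{R}^\ell$. Problem (P): $\min\{\sum_{i=1}^m\theta_i(x_i):\sum_{i=1}^mA_ix_i=b,\ x_i\in\mathcal{X}_i\}$, assumed to have a nonempty solution set. Write $u=(x_1,\dots,x_m)$, $w=(x_1,\dots,x_m,y)$ with $y\in\mathbb{R}^\ell$, $\theta(u)=\sum_i\theta_i(x_i)$, $F(w)=(-A_1^\top y,\dots,-A_m^\top y,\ \sum_iA_ix_i-b)$, $\mathcal{W}=\mathcal{X}_1\times\cdots\times\mathcal{X}_m\times\mathbb{R}^\ell$, and $\mathcal{W}^*=\{w^*\in\mathcal{W}:\theta(u)-\theta(u^* )+(w-w^* )^\top F(w^* )\ge0\ \forall w\in\mathcal{W}\}$ (nonempty). For symmetric $G$, $\|v\|_G^2:=v^\top Gv$; $\|\cdot\|$ is the Euclidean norm. Vectors are partitioned as $w=(R,x_m,y)$ with $R=(x_1,\dots,x_{m-1})$. Parameters: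 $\rho>0$, $\gamma\in(0,2)$, symmetric positive definite $P_i\in\mathbb{R}^{n_i\times n_i}$ ($i=1,\dots,m$) such that $G_1\succ0$, where $G_1$ is the symmetric block matrix with diagonal blocks $P_1,\dots,P_{m-1}$ and $(i,j)$ block $-\rho A_i^\top A_j$ for $i\ne j$, $1\le i,j\le m-1$. Matrices (w.r.t. the partition $(R,x_m,y)$): $Q=\begin{pmatrix}G_1&0&0\\0&\rho A_m^\top A_m+P_m&(1-\gamma)A_m^\top\\0&-A_m&\frac1\rho I_\ell\end{pmatrix}$, $M=\begin{pmatrix}I&0&0\\0&I_{n_m}&0\\0&-\rho A_m&\gamma I_\ell\end{pmatrix}$, $H=\begin{pmatrix}G_1&0&0\\0&P_m+\frac\rho\gamma A_m^\top A_m&\frac{1-\gamma}\gamma A_m^\top\\0&\frac{1-\gamma}\gamma A_m&\frac1{\gamma\rho}I_\ell\end{pmatrix}$, $N=Q^\top+Q-M^\top HM$. L-GADMM iteration: from an arbitrary $w^0=(x_1^0,\dots,x_m^0,y^0)\in\mathcal{W}$, for $k=0,1,2,\dots$: $x_j^{k+1}=\arg\min_{x_j\in\mathcal{X}_j}\{\theta_j(x_j)+\frac\rho2\|A_jx_j+\sum_{i=1,i\ne j}^mA_ix_i^k-b-\frac{y^k}\rho\|^2+\frac12\|x_j-x_j^k\|_{P_j}^2\}$ for $j=1,\dots,m-1$; $x_m^{k+1}=\arg\min_{x_m\in\mathcal{X}_m}\{\theta_m(x_m)+\frac\rho2\|\gamma\sum_{i=1}^{m-1}A_ix_i^{k+1}+(1-\gamma)(b-A_mx_m^k)+A_mx_m-b-\frac{y^k}\rho\|^2+\frac12\|x_m-x_m^k\|_{P_m}^2\}$;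 $y^{k+1}=y^k-\rho\big(\gamma\sum_{i=1}^{m-1}A_ix_i^{k+1}+(1-\gamma)(b-A_mx_m^k)+A_mx_m^{k+1}-b\big)$. Auxiliary sequence: $\bar w^k=(\bar x_1^k,\dots,\bar x_m^k,\bar y^k)$ with $\bar x_i^k=x_i^{k+1}$ ($i=1,\dots,m$) and $\bar y^k=y^k-\rho(\sum_{i=1}^{m-1}A_ix_i^{k+1}+A_mx_m^k-b)$; $\bar u^k=(\bar x_1^k,\dots,\bar x_m^k)$, $R^k=(x_1^k,\dots,x_{m-1}^k)$, $\bar R^k=(\bar x_1^k,\dots,\bar x_{m-1}^k)$. *)

(* Defs.v *)
From HB Require Import structures.
From mathcomp Require Import all_boot all_order all_algebra.
From mathcomp Require Import all_classical all_reals all_analysis.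
Set Implicit Arguments. Unset Strict Implicit. Unset Printing Implicit Defensive.
Import Order.TTheory GRing.Theory Num.Theory.
Import numFieldTopology.Exports.
Local Open Scope ring_scope.

Section LGADMM.
Variable R : realType.

Definition sqnorm (k : nat) (v : 'cV[R]_k) : R := (v^T *m v) 0 0.
Definition qnorm (k : nat) (G : 'M[R]_k) (v : 'cV[R]_k) : R := (v^T *m G *m v) 0 0.

Definition spd (k : nat) (P : 'M[R]_k) : Prop :=
  P^T = P /\ forall v : 'cV[R]_k, v != 0 -> 0 < qnorm P v.

Definition cvx_fun (k : nat) (f : 'cV[R]_k -> R) : Prop :=
  forall (x y : 'cV[R]_k) (t : R), 0 <= t -> t <= 1 ->
    f (t *: x + (1 - t) *: y) <= t * f x + (1 - t) * f y.

Definition cvx_set (k : nat) (S : set 'cV[R]_k) : Prop :=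
  forall (x y : 'cV[R]_k) (t : R), S x -> S y -> 0 <= t -> t <= 1 ->
    S (t *: x + (1 - t) *: y).

Definition is_argmin (k : nat) (S : set 'cV[R]_k) (f : 'cV[R]_k -> R) (x : 'cV[R]_k) : Prop :=
  S x /\ forall z, S z -> f x <= f z.

Variables (m : nat) (hm : (2 <= m)%N) (l : nat) (n : 'I_m -> nat).

(* the last block index m (numbered m-1 in 'I_m) *)
Definition lst : 'I_m := Ordinal (introT idP (etrans (ltn_predL m) (ltnW hm))).

Definition fam := forall i : 'I_m, 'cV[R]_(n i).
Definition Wsp := (fam * 'cV[R]_l)%type.

Definition wsub (w z : Wsp) : Wsp := (fun i => w.1 i - z.1 i, w.2 - z.2).
Definition wadd (w z : Wsp) : Wsp := (fun i => w.1 i + z.1 i, w.2 + z.2).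
Definition ipw (w z : Wsp) : R :=
  \sum_(i < m) ((w.1 i)^T *m z.1 i) 0 0 + (w.2^T *m z.2) 0 0.

Variables (A : forall i : 'I_m, 'M[R]_(l, n i)) (b : 'cV[R]_l).
Variables (P : forall i : 'I_m, 'M[R]_(n i)) (rho gamma : R).

(* action of G_1 (on R = (x_1..x_{m-1}); the m-th component is 0 / ignored) *)
Definition G1op (x : fam) : fam := fun i =>
  if i != lst then
    P i *m x i - rho *: \sum_(j < m | (j != lst) && (j != i)) ((A i)^T *m A j *m x j)
  else 0.
Definition G1Top (x : fam) : fam := fun i =>
  if i != lst then
    (P i)^T *m x i - rho *: \sum_(j < m | (j != lst) && (j != i)) (((A j)^T *m A i)^T *m x j)
  else 0.
Definition qG1 (x : fam) : R := \sum_(i < m | i != lst) ((x i)^T *m G1op x i) 0 0.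

Definition Qop (w : Wsp) : Wsp :=
  (fun i => if i == lst then
      (rho *: ((A i)^T *m A i) + P i) *m w.1 i + (1 - gamma) *: ((A i)^T *m w.2)
    else G1op w.1 i,
   - (A lst *m w.1 lst) + rho^-1 *: w.2).
Definition QTop (w : Wsp) : Wsp :=
  (fun i => if i == lst then
      (rho *: ((A i)^T *m A i) + P i)^T *m w.1 i + (- A i)^T *m w.2
    else G1Top w.1 i,
   ((1 - gamma) *: (A lst)^T)^T *m w.1 lst + (rho^-1 *: (1%:M : 'M[R]_l))^T *m w.2).
Definition Mop (w : Wsp) : Wsp :=
  (w.1, - rho *: (A lst *m w.1 lst) + gamma *: w.2).
Definition MTop (w : Wsp) : Wsp :=
  (fun i => if i == lst then w.1 i + (- rho *: A i)^T *m w.2 else w.1 i,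
   gamma *: w.2).
Definition Hop (w : Wsp) : Wsp :=
  (fun i => if i == lst then
      (P i + (rho / gamma) *: ((A i)^T *m A i)) *m w.1 i
        + ((1 - gamma) / gamma) *: ((A i)^T *m w.2)
    else G1op w.1 i,
   ((1 - gamma) / gamma) *: (A lst *m w.1 lst) + (gamma * rho)^-1 *: w.2).
Definition Nop (w : Wsp) : Wsp :=
  wsub (wadd (QTop w) (Qop w)) (MTop (Hop (Mop w))).

Definition normH (w : Wsp) : R := ipw w (Hop w).
Definition normN (w : Wsp) : R := ipw w (Nop w).

Unset Implicit Arguments.
Variables (theta : forall i : 'I_m, 'cV[R]_(n i) -> R)
          (X : forall i : 'I_m, set 'cV[R]_(n i)).

Definition thetaU (u : fam) : R := \sum_(i < m) theta i (u i).
Definition inW (w : Wsp) : Prop := forall i, X i (w.1 i).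
Definition Fop (w : Wsp) : Wsp :=
  (fun i => - ((A i)^T *m w.2), \sum_(i < m) A i *m w.1 i - b).
Definition Wstar (ws : Wsp) : Prop :=
  inW ws /\ forall w, inW w -> 0 <= thetaU w.1 - thetaU ws.1 + ipw (wsub w ws) (Fop ws).
Definition is_solP (u : fam) : Prop :=
  (forall i, X i (u i)) /\ \sum_(i < m) A i *m u i = b /\
  forall v : fam, (forall i, X i (v i)) -> \sum_(i < m) A i *m v i = b ->
     thetaU u <= thetaU v.

Definition subobj (xk : fam) (yk : 'cV[R]_l) (j : 'I_m) (z : 'cV[R]_(n j)) : R :=
  theta j z
  + rho / 2 * sqnorm (A j *m z + \sum_(i < m | i != j) A i *m xk i - b - rho^-1 *: yk)
  + 1 / 2 * qnorm (P j) (z - xk j).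
Definition subobj_m (xk xk1 : fam) (yk : 'cV[R]_l) (z : 'cV[R]_(n lst)) : R :=
  theta lst z
  + rho / 2 * sqnorm (gamma *: \sum_(i < m | i != lst) A i *m xk1 i
                      + (1 - gamma) *: (b - A lst *m xk lst) + A lst *m z - b - rho^-1 *: yk)
  + 1 / 2 * qnorm (P lst) (z - xk lst).

Definition is_LGADMM (xs : nat -> fam) (ys : nat -> 'cV[R]_l) : Prop :=
  inW (xs 0%N, ys 0%N) /\
  forall k : nat,
    (forall j : 'I_m, j != lst -> is_argmin (X j) (subobj (xs k) (ys k) j) (xs k.+1 j)) /\
    is_argmin (X lst) (subobj_m (xs k) (xs k.+1) (ys k)) (xs k.+1 lst) /\
    ys k.+1 = ys k - rho *: (gamma *: \sum_(i < m | i != lst) A i *m xs k.+1 i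
                      + (1 - gamma) *: (b - A lst *m xs k lst) + A lst *m xs k.+1 lst - b).

Definition wbar (xs : nat -> fam) (ys : nat -> 'cV[R]_l) (k : nat) : Wsp :=
  (xs k.+1, ys k - rho *: (\sum_(i < m | i != lst) A i *m xs k.+1 i + A lst *m xs k lst - b)).

End LGADMM.

Arguments thetaU {R m n} theta u.
Arguments inW {R m l n} X w.
Arguments Fop {R m l n} A b w.
Arguments Wstar {R m l n} A b theta X ws.
Arguments is_solP {R m l n} A b theta X u.
Arguments subobj {R m l n} A b P rho theta xk yk j z.
Arguments subobj_m {R m} hm {l n} A b P rho gamma theta xk xk1 yk z.
Arguments is_LGADMM {R m} hm {l n} A b P rho gamma theta X xs ys.
Arguments wbar {R m} hm {l n} A b rho xs ys k.

(* Main.v *)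
Require Import Defs.
From HB Require Import structures.
From mathcomp Require Import all_boot all_order all_algebra.
From mathcomp Require Import all_classical all_reals all_analysis.
From mathcomp Require Import ring lra.
Import Order.TTheory GRing.Theory Num.Theory.
Import numFieldTopology.Exports.
Local Open Scope ring_scope.
Local Open Scope classical_set_scope.

Definition dot {R : realType} {k : nat} (u v : 'cV[R]_k) : R := (u^T *m v) 0 0.

Lemma dotC {R : realType} {k : nat} (u v : 'cV[R]_k) : dot u v = dot v u.
Proof.
rewrite /dot; have -> : u^T *m v = (v^T *m u)^T by rewrite trmx_mul trmxK.
by rewrite mxE.
Qed.

Lemma dotDr {R : realType} {k : nat} (u v w : 'cV[R]_k) : dot u (v + w) = dot u v + dot u w.
Proof. by rewrite /dot mulmxDr mxE. Qed.
Lemma dotNr {R : realType} {k : nat} (u v : 'cV[R]_k) : dot u (- v) = - dot u v.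
Proof. by rewrite /dot mulmxN mxE. Qed.
Lemma dotBr {R : realType} {k : nat} (u v w : 'cV[R]_k) : dot u (v - w) = dot u v - dot u w.
Proof. by rewrite dotDr dotNr. Qed.
Lemma dotZr {R : realType} {k : nat} (a : R) (u v : 'cV[R]_k) : dot u (a *: v) = a * dot u v.
Proof. by rewrite /dot -scalemxAr mxE. Qed.
Lemma dotDl {R : realType} {k : nat} (u v w : 'cV[R]_k) : dot (v + w) u = dot v u + dot w u.
Proof. by rewrite dotC dotDr !(dotC u). Qed.
Lemma dotNl {R : realType} {k : nat} (u v : 'cV[R]_k) : dot (- v) u = - dot v u.
Proof. by rewrite dotC dotNr dotC. Qed.
Lemma dotBl {R : realType} {k : nat} (u v w : 'cV[R]_k) : dot (v - w) u = dot v u - dot w u.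
Proof. by rewrite dotDl dotNl. Qed.
Lemma dotZl {R : realType} {k : nat} (a : R) (u v : 'cV[R]_k) : dot (a *: v) u = a * dot v u.
Proof. by rewrite dotC dotZr dotC. Qed.
Lemma dot_sumr {R : realType} {k : nat} (I : finType) (Pr : pred I) (u : 'cV[R]_k) (F : I -> 'cV[R]_k) :
  dot u (\sum_(i | Pr i) F i) = \sum_(i | Pr i) dot u (F i).
Proof. by rewrite /dot mulmx_sumr summxE. Qed.
Lemma dot_mul {R : realType} {k j : nat} (u : 'cV[R]_k) (B : 'M[R]_(k, j)) (v : 'cV[R]_j) :
  dot u (B *m v) = dot v (B^T *m u).
Proof. by rewrite [RHS]dotC /dot trmx_mul trmxK mulmxA. Qed.
Lemma dot_trmul {R : realType} {k j : nat} (u : 'cV[R]_k) (B : 'M[R]_(j, k)) (v : 'cV[R]_j) :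
  dot u (B^T *m v) = dot v (B *m u).
Proof. by rewrite dot_mul trmxK. Qed.

Lemma ipwE {R : realType} {m l} {n : 'I_m -> nat} (w z : Wsp R l n) :
  ipw w z = \sum_(i < m) dot (w.1 i) (z.1 i) + dot w.2 z.2.
Proof. by []. Qed.

Lemma lim0 {R : realType} (a C : R) :
  (forall t : R, 0 < t -> t <= 1 -> 0 <= t * a + t ^+ 2 * C) -> 0 <= a.
Proof.
move=> H; rewrite leNgt; apply/negP => ha.
case: (lerP C 0) => hC.
  by have := H 1 ltr01 (lexx 1); rewrite mul1r expr1n mul1r; lra.
case: (lerP (- a) (2 * C)) => hac.
  set t := - a / (2 * C).
  have t0 : 0 < t by apply: divr_gt0; lra.
  have t1 : t <= 1 by rewrite /t ler_pdivrMr; lra.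
  have e : t * C = - a / 2 by rewrite /t; field; lra.
  have := H t t0 t1; rewrite expr2 -mulrA e.
  nra.
by have := H 1 ltr01 (lexx 1); rewrite mul1r expr1n mul1r; lra.
Qed.

Lemma vi_min {R : realType} {k : nat} (S : set 'cV[R]_k) (th phi : 'cV[R]_k -> R)
  (x z : 'cV[R]_k) (D C : R) :
  cvx_fun th -> cvx_set S -> S x -> S z ->
  (forall y, S y -> th x + phi x <= th y + phi y) ->
  (forall t, phi (t *: z + (1 - t) *: x) = phi x + t * D + t ^+ 2 * C) ->
  0 <= th z - th x + D.
Proof.
move=> hth hS Sx Sz hmin hexp; apply: (@lim0 _ _ C) => t t0 t1.
have Szt := hS z x t Sz Sx (ltW t0) t1.
have h1 := hmin _ Szt; have h2 := hth z x t (ltW t0) t1.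
rewrite hexp in h1.
nra.
Qed.

Lemma sqnormE {R : realType} {k : nat} (v : 'cV[R]_k) : sqnorm v = dot v v.
Proof. by []. Qed.
Lemma qnormE {R : realType} {k : nat} (P : 'M[R]_k) (v : 'cV[R]_k) : qnorm P v = dot v (P *m v).
Proof. by rewrite /qnorm /dot mulmxA. Qed.

Lemma quad_exp {R : realType} {k l : nat} (A : 'M[R]_(l,k)) (P : 'M[R]_k) (c : 'cV[R]_l)
  (x0 x z : 'cV[R]_k) (rho t : R) : P^T = P ->
  rho / 2 * sqnorm (A *m (t *: z + (1 - t) *: x) + c) + 1 / 2 * qnorm P (t *: z + (1 - t) *: x - x0)
  = (rho / 2 * sqnorm (A *m x + c) + 1 / 2 * qnorm P (x - x0))
    + t * dot (z - x) (rho *: (A^T *m (A *m x + c)) + P *m (x - x0))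
    + t ^+ 2 * (rho / 2 * sqnorm (A *m (z - x)) + 1 / 2 * qnorm P (z - x)).
Proof.
move=> hP.
have e1 : A *m (t *: z + (1 - t) *: x) + c = (A *m x + c) + t *: (A *m (z - x)).
  rewrite mulmxDr mulmxBr -!scalemxAr.
  move: (A *m z) (A *m x) => p q.
  by apply/matrixP => i j; rewrite !mxE; ring.
have e2 : t *: z + (1 - t) *: x - x0 = (x - x0) + t *: (z - x).
  by apply/matrixP => i j; rewrite !mxE; ring.
rewrite e1 e2 !sqnormE !qnormE.
move: (A *m x + c) (x - x0) (z - x) => u g q.
rewrite !mulmxDr -!scalemxAr !(dotDl, dotDr, dotZl, dotZr).
rewrite (dotC (A *m q) u) (dot_mul g P q) hP (dot_trmul q A u).
move: (dot u u) (dot u (A *m q)) (dot (A *m q) (A *m q)) (dot g (P *m g)) (dot q (P *m g)) (dot q (P *m q)) => a1 a2 a3 a4 a5 a6. by field.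
Qed.

Lemma wspP {R : realType} {m l : nat} {n : 'I_m -> nat} (u v : Wsp R l n) :
  (forall i, u.1 i = v.1 i) -> u.2 = v.2 -> u = v.
Proof.
case: u => u1 u2; case: v => v1 v2 /= h1 ->.
by rewrite (functional_extensionality_dep h1).
Qed.

Lemma subrACA' {V : zmodType} (a b c d : V) : (a - b) - (c - d) = (a - c) - (b - d).
Proof. by rewrite !opprD !opprK addrACA. Qed.
Lemma addrsubACA {V : zmodType} (a b c d : V) : (a - b) + (c - d) = (a + c) - (b + d).
Proof. by rewrite opprD addrACA. Qed.

Lemma G1op_sub {R : realType} {m : nat} (hm : (1 < m)%N) {l : nat} {n : 'I_m -> nat}
  (A : forall i, 'M[R]_(l, n i)) (P : forall i, 'M[R]_(n i)) (rho : R) (x y : fam R n) i :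
  G1op hm A P rho (fun j => x j - y j) i = G1op hm A P rho x i - G1op hm A P rho y i.
Proof.
rewrite /G1op; case: ifP => _; last by rewrite subr0.
rewrite mulmxBr.
have -> : \sum_(j < m | (j != lst hm) && (j != i)) ((A i)^T *m A j *m (x j - y j))
  = \sum_(j < m | (j != lst hm) && (j != i)) ((A i)^T *m A j *m x j)
    - \sum_(j < m | (j != lst hm) && (j != i)) ((A i)^T *m A j *m y j).
  by rewrite -sumrB; apply: eq_bigr => j _; rewrite mulmxBr.
by rewrite scalerBr subrACA'.
Qed.

Lemma Hop_sub {R : realType} {m : nat} (hm : (1 < m)%N) {l : nat} {n : 'I_m -> nat}
  (A : forall i, 'M[R]_(l, n i)) (P : forall i, 'M[R]_(n i)) (rho gamma : R) (u v : Wsp R l n) :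
  Hop hm A P rho gamma (wsub u v) = wsub (Hop hm A P rho gamma u) (Hop hm A P rho gamma v).
Proof.
apply: wspP => [i|] /=.
  case: ifP => _; last exact: G1op_sub.
  by rewrite !mulmxBr scalerBr addrsubACA.
by rewrite !mulmxBr !scalerBr addrsubACA.
Qed.

Lemma dsum_swap {R : realType} {m : nat} (p : 'I_m) (F : 'I_m -> 'I_m -> R) :
  \sum_(i < m | i != p) \sum_(j < m | (j != p) && (j != i)) F i j
  = \sum_(i < m | i != p) \sum_(j < m | (j != p) && (j != i)) F j i.
Proof.
rewrite (exchange_big_dep (fun j => j != p)) /=; last by move=> i j _ /andP[].
apply: eq_bigr => j hj; apply: eq_bigl => i.
by rewrite hj /= (eq_sym j i).
Qed.

Lemma G1op_dot {R : realType} {m : nat} (hm : (1 < m)%N) {l : nat} {n : 'I_m -> nat}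
  (A : forall i, 'M[R]_(l, n i)) (P : forall i, 'M[R]_(n i)) (rho : R) (u v : fam R n) i :
  i != lst hm ->
  dot (u i) (G1op hm A P rho v i) = dot (u i) (P i *m v i)
     - rho * \sum_(j < m | (j != lst hm) && (j != i)) dot (A i *m u i) (A j *m v j).
Proof.
move=> hi; rewrite /G1op hi dotBr dotZr dot_sumr; congr (_ - _ * _).
apply: eq_bigr => j _.
by rewrite -mulmxA dot_trmul dotC.
Qed.

Lemma G1Top_dot {R : realType} {m : nat} (hm : (1 < m)%N) {l : nat} {n : 'I_m -> nat}
  (A : forall i, 'M[R]_(l, n i)) (P : forall i, 'M[R]_(n i)) (rho : R) (u v : fam R n) i :
  i != lst hm ->
  dot (u i) (G1Top hm A P rho v i) = dot (v i) (P i *m u i)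
     - rho * \sum_(j < m | (j != lst hm) && (j != i)) dot (A i *m u i) (A j *m v j).
Proof.
move=> hi; rewrite /G1Top hi dotBr dotZr dot_sumr dot_trmul; congr (_ - _ * _).
apply: eq_bigr => j _.
by rewrite dot_trmul -mulmxA dot_trmul.
Qed.

Lemma Hop_nf {R : realType} {m : nat} (hm : (1 < m)%N) {l : nat} {n : 'I_m -> nat}
  (A : forall i, 'M[R]_(l, n i)) (P : forall i, 'M[R]_(n i)) (rho gamma : R) (u v : Wsp R l n) :
  ipw u (Hop hm A P rho gamma v) =
  \sum_(i < m | i != lst hm) dot (u.1 i) (P i *m v.1 i)
  - rho * \sum_(i < m | i != lst hm) \sum_(j < m | (j != lst hm) && (j != i)) dot (A i *m u.1 i) (A j *m v.1 j)
  + (dot (u.1 (lst hm)) (P (lst hm) *m v.1 (lst hm))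
     + rho / gamma * dot (A (lst hm) *m u.1 (lst hm)) (A (lst hm) *m v.1 (lst hm))
     + (1 - gamma) / gamma * dot (A (lst hm) *m u.1 (lst hm)) v.2
     + (1 - gamma) / gamma * dot (A (lst hm) *m v.1 (lst hm)) u.2
     + (gamma * rho)^-1 * dot u.2 v.2).
Proof.
rewrite ipwE (bigD1 (lst hm)) //=.
have -> : \sum_(i < m | i != lst hm) dot (u.1 i) ((Hop hm A P rho gamma v).1 i) =
  \sum_(i < m | i != lst hm) (dot (u.1 i) (P i *m v.1 i)
     - rho * \sum_(j < m | (j != lst hm) && (j != i)) dot (A i *m u.1 i) (A j *m v.1 j)).
  apply: eq_bigr => i hi; rewrite /Hop /= (negbTE hi); exact: G1op_dot.
rewrite sumrB -mulr_sumr /Hop /= eqxx.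
rewrite mulmxDl -!scalemxAl -!mulmxA !(dotDr, dotZr) !dot_trmul.
rewrite (dotC u.2 (A (lst hm) *m v.1 (lst hm))).
rewrite (dotC (A (lst hm) *m v.1 (lst hm))) (dotC v.2). lra.
Qed.

Lemma Hsym {R : realType} {m : nat} (hm : (1 < m)%N) {l : nat} {n : 'I_m -> nat}
  (A : forall i, 'M[R]_(l, n i)) (P : forall i, 'M[R]_(n i)) (rho gamma : R) (u v : Wsp R l n) :
  (forall i, (P i)^T = P i) ->
  ipw u (Hop hm A P rho gamma v) = ipw v (Hop hm A P rho gamma u).
Proof.
move=> hP; rewrite !Hop_nf.
rewrite (dsum_swap (lst hm) (fun i j => dot (A i *m v.1 i) (A j *m u.1 j))).
have -> : \sum_(i < m | i != lst hm) dot (u.1 i) (P i *m v.1 i) =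
          \sum_(i < m | i != lst hm) dot (v.1 i) (P i *m u.1 i).
  by apply: eq_bigr => i _; rewrite dot_mul hP.
under [X in _ - rho * X + _ = _]eq_bigr => i _ do under eq_bigr => j _ do rewrite dotC.
rewrite dot_mul hP (dotC (A (lst hm) *m u.1 (lst hm))) (dotC u.2 v.2).
ring.
Qed.

Lemma Qadj {R : realType} {m : nat} (hm : (1 < m)%N) {l : nat} {n : 'I_m -> nat}
  (A : forall i, 'M[R]_(l, n i)) (P : forall i, 'M[R]_(n i)) (rho gamma : R) (u v : Wsp R l n) :
  ipw u (QTop hm A P rho gamma v) = ipw v (Qop hm A P rho gamma u).
Proof.
rewrite !ipwE (bigD1 (lst hm)) // [in RHS](bigD1 (lst hm)) //=.
have -> : \sum_(i < m | i != lst hm) dot (u.1 i) ((QTop hm A P rho gamma v).1 i) =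
  \sum_(i < m | i != lst hm) (dot (v.1 i) (P i *m u.1 i)
     - rho * \sum_(j < m | (j != lst hm) && (j != i)) dot (A i *m u.1 i) (A j *m v.1 j)).
  apply: eq_bigr => i hi; rewrite /QTop /= (negbTE hi); exact: G1Top_dot.
have -> : \sum_(i < m | i != lst hm) dot (v.1 i) ((Qop hm A P rho gamma u).1 i) =
  \sum_(i < m | i != lst hm) (dot (v.1 i) (P i *m u.1 i)
     - rho * \sum_(j < m | (j != lst hm) && (j != i)) dot (A i *m v.1 i) (A j *m u.1 j)).
  apply: eq_bigr => i hi; rewrite /Qop /= (negbTE hi); exact: G1op_dot.
rewrite !sumrB -!mulr_sumr.
rewrite (dsum_swap (lst hm) (fun i j => dot (A i *m v.1 i) (A j *m u.1 j))).
under [X in _ = _ + (_ - rho * X) + _]eq_bigr => i _ do under eq_bigr => j _ do rewrite dotC.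
rewrite !eqxx !dotDr.
rewrite [dot (u.1 _) (_^T *m v.1 _)]dot_trmul [dot (u.1 _) (_^T *m v.2)]dot_trmul.
rewrite [dot u.2 (_^T *m v.1 _)]dot_trmul [dot u.2 (_^T *m v.2)]dot_trmul.
rewrite mulNmx -!scalemxAl mul1mx !(dotNr, dotZr).
lra.
Qed.


Lemma Madj {R : realType} {m : nat} (hm : (1 < m)%N) {l : nat} {n : 'I_m -> nat}
  (A : forall i, 'M[R]_(l, n i)) (rho gamma : R) (u v : Wsp R l n) :
  ipw u (MTop hm A rho gamma v) = ipw (Mop hm A rho gamma u) v.
Proof.
rewrite !ipwE (bigD1 (lst hm)) // [in RHS](bigD1 (lst hm)) //=.
have -> : \sum_(i < m | i != lst hm) dot (u.1 i) ((MTop hm A rho gamma v).1 i) =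
  \sum_(i < m | i != lst hm) dot (u.1 i) (v.1 i).
  by apply: eq_bigr => i hi; rewrite /MTop /= (negbTE hi).
rewrite /MTop /Mop /= eqxx.
rewrite !dotDr [dot (u.1 _) (_^T *m v.2)]dot_trmul -scalemxAl.
rewrite !(dotDl, dotZl, dotZr).
rewrite (dotC v.2).
lra.
Qed.

Lemma HMQ {R : realType} {m : nat} (hm : (1 < m)%N) {l : nat} {n : 'I_m -> nat}
  (A : forall i, 'M[R]_(l, n i)) (P : forall i, 'M[R]_(n i)) (rho gamma : R) (v : Wsp R l n) :
  rho != 0 -> gamma != 0 ->
  Hop hm A P rho gamma (Mop hm A rho gamma v) = Qop hm A P rho gamma v.
Proof.
move=> hr hg; apply: wspP => [i|] /=.
  rewrite /Hop /Qop /Mop /=; case: eqP => [->|//] /=.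
  rewrite !mulmxDl !mulmxDr -!scalemxAl -!scalemxAr -!mulmxA.
  move: (P (lst hm) *m v.1 (lst hm)) ((A (lst hm))^T *m (A (lst hm) *m v.1 (lst hm)))
    ((A (lst hm))^T *m v.2) => p q r.
  by apply/matrixP => i0 j0; rewrite !mxE; field.
rewrite /Hop /Qop /Mop /=.

move: (A (lst hm) *m v.1 (lst hm)) v.2 => p q.
by apply/matrixP => i j; rewrite !mxE; field; rewrite hg hr.
Qed.

Lemma ipw_subl {R : realType} {m l : nat} {n : 'I_m -> nat} (a b c : Wsp R l n) :
  ipw (wsub a b) c = ipw a c - ipw b c.
Proof.
rewrite !ipwE /= dotBl.
under eq_bigr => i _ do rewrite dotBl.
rewrite sumrB; lra.
Qed.
Lemma ipw_subr {R : realType} {m l : nat} {n : 'I_m -> nat} (a b c : Wsp R l n) :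
  ipw c (wsub a b) = ipw c a - ipw c b.
Proof.
rewrite !ipwE /= dotBr.
under eq_bigr => i _ do rewrite dotBr.
rewrite sumrB; lra.
Qed.
Lemma ipw_addr {R : realType} {m l : nat} {n : 'I_m -> nat} (a b c : Wsp R l n) :
  ipw c (wadd a b) = ipw c a + ipw c b.
Proof.
rewrite !ipwE /= dotDr.
under eq_bigr => i _ do rewrite dotDr.
rewrite big_split /=; lra.
Qed.

Lemma Fmono {R : realType} {m l : nat} {n : 'I_m -> nat} (A : forall i, 'M[R]_(l, n i))
  (b : 'cV[R]_l) (w z : Wsp R l n) :
  ipw (wsub w z) (Fop A b z) + ipw (wsub z w) (Fop A b w) = 0.
Proof.
rewrite !ipwE /= !dotBr !dot_sumr.
have h : forall i, dot (w.1 i - z.1 i) (- ((A i)^T *m z.2)) + dot (z.1 i - w.1 i) (- ((A i)^T *m w.2))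
   + dot (w.2 - z.2) (A i *m z.1 i) + dot (z.2 - w.2) (A i *m w.1 i) = 0.
  by move=> i; rewrite !dotNr !dot_trmul !mulmxBr !(dotBr, dotBl); lra.
have hs : \sum_(i < m) dot (w.1 i - z.1 i) (- ((A i)^T *m z.2))
   + \sum_(i < m) dot (z.1 i - w.1 i) (- ((A i)^T *m w.2))
   + \sum_(i < m) dot (w.2 - z.2) (A i *m z.1 i) + \sum_(i < m) dot (z.2 - w.2) (A i *m w.1 i) = 0.
  by rewrite -!big_split /=; apply: big1 => i _; exact: h.
rewrite !dotBl; lra.
Qed.

Lemma vecid1 {R : realType} {k l : nat} (T : 'M[R]_(k, l)) (Pp : 'M[R]_k)
  (a1 bb y Sb a0 Sk : 'cV[R]_l) (x1 xk : 'cV[R]_k) (rho : R) : rho != 0 ->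
  rho *: (T *m (a1 + (a0 + Sk - bb - rho^-1 *: y))) + Pp *m (x1 - xk) =
  - (T *m (y - rho *: (a1 + Sb + a0 - bb))) - (Pp *m (xk - x1) - rho *: (T *m (Sk - Sb))).
Proof.
move=> hr.
have h : rho *: (a1 + (a0 + Sk - bb - rho^-1 *: y)) = - (y - rho *: (a1 + Sb + a0 - bb)) + rho *: (Sk - Sb).
  by apply/matrixP => p q; rewrite !mxE; field.
rewrite scalemxAr h mulmxDr mulmxN -scalemxAr.
move: (T *m (y - rho *: (a1 + Sb + a0 - bb))) (T *m (Sk - Sb)) => r s.
rewrite !mulmxBr; move: (Pp *m x1) (Pp *m xk) => p q.
by apply/matrixP => i j; rewrite !mxE; ring.
Qed.

Lemma vecid2 {R : realType} {k l : nat} (Aa : 'M[R]_(l, k)) (Pp : 'M[R]_k)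
  (S1 bb y : 'cV[R]_l) (x1 xk : 'cV[R]_k) (rho gamma : R) : rho != 0 ->
  rho *: (Aa^T *m (Aa *m x1 + (gamma *: S1 + (1 - gamma) *: (bb - Aa *m xk) - bb - rho^-1 *: y)))
    + Pp *m (x1 - xk) =
  - (Aa^T *m (y - rho *: (S1 + Aa *m xk - bb)))
  - ((rho *: (Aa^T *m Aa) + Pp) *m (xk - x1)
     + (1 - gamma) *: (Aa^T *m (y - (y - rho *: (S1 + Aa *m xk - bb))))).
Proof.
move=> hr.
rewrite mulmxDl -scalemxAl -mulmxA.
rewrite !(mulmxDr, mulmxBr, mulmxN) -!scalemxAr ?(mulmxDr, mulmxBr, mulmxN) -?scalemxAr ?(mulmxDr, mulmxBr, mulmxN) -?scalemxAr.
move: (Aa^T *m (Aa *m x1)) (Aa^T *m S1) (Aa^T *m bb) (Aa^T *m (Aa *m xk)) (Aa^T *m y)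
  (Pp *m x1) (Pp *m xk) => p1 p2 p3 p4 p5 p6 p7.
by apply/matrixP => i j; rewrite !mxE; field.
Qed.

Lemma reordL {R : realType} {l : nat} (p q r s t : 'cV[R]_l) :
  p + q + r - s - t = r + (p + q - s - t).
Proof. by apply/matrixP => i j; rewrite !mxE; ring. Qed.

Theorem lemma3p3 (R : realType) (m : nat) (hm : (2 <= m)%N) (l : nat)
  (n : 'I_m -> nat)
  (theta : forall i : 'I_m, 'cV[R]_(n i) -> R)
  (X : forall i : 'I_m, set 'cV[R]_(n i))
  (A : forall i : 'I_m, 'M[R]_(l, n i)) (b : 'cV[R]_l)
  (htheta : forall i, cvx_fun (theta i))
  (hXne : forall i, X i !=set0)
  (hXcl : forall i, closed (X i))
  (hXcv : forall i, cvx_set (X i))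
  (hA : forall i, \rank (A i) = n i)
  (hsol : exists u, is_solP A b theta X u)
  (hWne : exists ws, Wstar A b theta X ws)
  (rho gamma : R) (hrho : 0 < rho) (hgamma : 0 < gamma < 2)
  (P : forall i : 'I_m, 'M[R]_(n i))
  (hP : forall i, spd (P i))
  (hG1 : forall x : fam R n, (exists i, i != lst hm /\ x i != 0) -> 0 < qG1 hm A P rho x)
  (xs : nat -> fam R n) (ys : nat -> 'cV[R]_l)
  (hiter : is_LGADMM hm A b P rho gamma theta X xs ys) :
  forall (k : nat) (ws : Wsp R l n), Wstar A b theta X ws ->
    normH hm A P rho gamma (wsub (xs k.+1, ys k.+1) ws)
    <= normH hm A P rho gamma (wsub (xs k, ys k) ws)
       - normN hm A P rho gamma (wsub (xs k, ys k) (wbar hm A b rho xs ys k)).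
Proof.
move=> k ws hws.
have hr : rho != 0 by rewrite gt_eqF.
have hg : gamma != 0 by case/andP: hgamma => h _; rewrite gt_eqF.
have hPs : forall i, (P i)^T = P i by move=> i; case: (hP i).
set wb := wbar hm A b rho xs ys k.
set d := wsub (xs k, ys k) wb.
set e := wsub (xs k, ys k) ws.
have [_ hit] := hiter; have [hj [hl hy]] := hit k.
have F1 : wsub (xs k.+1, ys k.+1) ws = wsub e (Mop hm A rho gamma d).
  rewrite /e /d /wb /wbar /Mop; apply: wspP => [i|] /=.
    by apply/matrixP => p q; rewrite !mxE; ring.
  rewrite hy mulmxBr.
  move: (\sum_(i < m | i != lst hm) A i *m xs k.+1 i) (A (lst hm) *m xs k (lst hm))
    (A (lst hm) *m xs k.+1 (lst hm)) (ys k) (ws.2) (b) => S a0 a1 y z bb.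
  by apply/matrixP => i j; rewrite !mxE; ring.
have F2 : wsub e d = wsub wb ws.
  apply: wspP => [i|] /=; by rewrite opprB addrC addrA subrK.
have F3 : ipw (wsub ws wb) (Qop hm A P rho gamma d) <= 0.
  have VI : forall i, dot (ws.1 i - wb.1 i) ((Qop hm A P rho gamma d).1 i) <=
     theta i (ws.1 i) - theta i (wb.1 i) + dot (ws.1 i - wb.1 i) ((Fop A b wb).1 i).
    move=> i; case: (eqVneq i (lst hm)) => [hi|hi].
      subst i.
      have am := hl.
      set c := gamma *: \sum_(i < m | i != lst hm) A i *m xs k.+1 i
        + (1 - gamma) *: (b - A (lst hm) *m xs k (lst hm)) - b - rho^-1 *: ys k.
      have reord : forall z, gamma *: \sum_(i < m | i != lst hm) A i *m xs k.+1 i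
        + (1 - gamma) *: (b - A (lst hm) *m xs k (lst hm)) + A (lst hm) *m z - b - rho^-1 *: ys k
        = A (lst hm) *m z + c by move=> z; rewrite /c reordL.
      have key : 0 <= theta (lst hm) (ws.1 (lst hm)) - theta (lst hm) (xs k.+1 (lst hm))
        + dot (ws.1 (lst hm) - xs k.+1 (lst hm))
        (rho *: ((A (lst hm))^T *m (A (lst hm) *m xs k.+1 (lst hm) + c))
         + P (lst hm) *m (xs k.+1 (lst hm) - xs k (lst hm))).
        apply: (vi_min (X (lst hm)) (theta (lst hm))
          (fun y => rho / 2 * sqnorm (A (lst hm) *m y + c) + 1 / 2 * qnorm (P (lst hm)) (y - xs k (lst hm)))
          (xs k.+1 (lst hm)) (ws.1 (lst hm)) _
          (rho / 2 * sqnorm (A (lst hm) *m (ws.1 (lst hm) - xs k.+1 (lst hm)))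
            + 1 / 2 * qnorm (P (lst hm)) (ws.1 (lst hm) - xs k.+1 (lst hm)))
          (htheta (lst hm)) (hXcv (lst hm)) am.1 (hws.1 (lst hm))).
          move=> y Sy; move: (am.2 y Sy); rewrite /subobj_m !reord /= => H.
          by rewrite !addrA; move: H; rewrite ?addrA.
        by move=> t /=; apply: quad_exp.
      have vid : rho *: ((A (lst hm))^T *m (A (lst hm) *m xs k.+1 (lst hm) + c))
         + P (lst hm) *m (xs k.+1 (lst hm) - xs k (lst hm))
         = (Fop A b wb).1 (lst hm) - (Qop hm A P rho gamma d).1 (lst hm).
        rewrite /Qop /Fop /d /wb /wbar /c /= eqxx; exact: vecid2.
      by move: key; rewrite vid dotBr; lra.
    have am := hj i hi.
    set c := \sum_(j < m | j != i) A j *m xs k j - b - rho^-1 *: ys k.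
    have key : 0 <= theta i (ws.1 i) - theta i (xs k.+1 i) + dot (ws.1 i - xs k.+1 i)
        (rho *: ((A i)^T *m (A i *m xs k.+1 i + c)) + P i *m (xs k.+1 i - xs k i)).
      apply: (vi_min (X i) (theta i)
        (fun y => rho / 2 * sqnorm (A i *m y + c) + 1 / 2 * qnorm (P i) (y - xs k i))
        (xs k.+1 i) (ws.1 i) _
        (rho / 2 * sqnorm (A i *m (ws.1 i - xs k.+1 i)) + 1 / 2 * qnorm (P i) (ws.1 i - xs k.+1 i))
        (htheta i) (hXcv i) am.1 (hws.1 i)).
        move=> y Sy; move: (am.2 y Sy); rewrite /subobj /c /= => H.
        by rewrite !addrA; move: H; rewrite ?addrA.
      by move=> t /=; apply: quad_exp.
    have vid : rho *: ((A i)^T *m (A i *m xs k.+1 i + c)) + P i *m (xs k.+1 i - xs k i)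
       = (Fop A b wb).1 i - (Qop hm A P rho gamma d).1 i.
      rewrite /Qop /Fop /G1op /d /wb /wbar /c /= (negbTE hi).
      have s1 : \sum_(j < m | (j != lst hm) && (j != i)) (A i)^T *m A j *m (xs k j - xs k.+1 j)
          = (A i)^T *m (\sum_(j < m | (j != lst hm) && (j != i)) A j *m xs k j
                       - \sum_(j < m | (j != lst hm) && (j != i)) A j *m xs k.+1 j).
        by rewrite mulmxBr !mulmx_sumr -sumrB; apply: eq_bigr => j _; rewrite mulmxBr !mulmxA.
      have s2 : \sum_(j < m | j != i) A j *m xs k j = A (lst hm) *m xs k (lst hm)
          + \sum_(j < m | (j != lst hm) && (j != i)) A j *m xs k j.
        rewrite (bigD1 (lst hm)) /=; last by rewrite eq_sym.
        by congr (_ + _); apply: eq_bigl => j; rewrite andbC.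
      have s3 : \sum_(j < m | j != lst hm) A j *m xs k.+1 j = A i *m xs k.+1 i
          + \sum_(j < m | (j != lst hm) && (j != i)) A j *m xs k.+1 j.
        by rewrite (bigD1 i).
      rewrite s1 s2 s3; exact: vecid1.
    by move: key; rewrite vid dotBr; lra.
  have VY : dot (ws.2 - wb.2) (Qop hm A P rho gamma d).2 = dot (ws.2 - wb.2) (Fop A b wb).2.
    rewrite /Qop /Fop /d /wb /wbar /=; congr (dot _ _).
    rewrite [in RHS](bigD1 (lst hm)) //= mulmxBr.
    move: (\sum_(i < m | i != lst hm) A i *m xs k.+1 i) (A (lst hm) *m xs k (lst hm))
      (A (lst hm) *m xs k.+1 (lst hm)) (ys k) (b) => S a0 a1 y bb.
    by apply/matrixP => p q; rewrite !mxE; field.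
  have inWb : inW X wb.
    move=> i; rewrite /wb /wbar /=.
    by case: (eqVneq i (lst hm)) => [->|hi]; [exact: hl.1 | exact: (hj i hi).1].
  have Wst := hws.2 wb inWb.
  have Mo := Fmono A b ws wb.
  have hsum : \sum_(i < m) dot (ws.1 i - wb.1 i) ((Qop hm A P rho gamma d).1 i) <=
     \sum_(i < m) (theta i (ws.1 i) - theta i (wb.1 i) + dot (ws.1 i - wb.1 i) ((Fop A b wb).1 i)).
    by apply: ler_sum => i _; exact: VI.
  rewrite big_split sumrB /= in hsum.
  move: Wst Mo hsum; rewrite !ipwE /thetaU /= VY.
  lra.
rewrite F1 /normH /normN.
clearbody e d; clearbody wb.
rewrite Hop_sub HMQ // !ipw_subl !ipw_subr.
rewrite ipw_addr Qadj Madj HMQ //.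
rewrite (Hsym _ _ _ _ _ (Mop hm A rho gamma d) e) // HMQ //.
have F2q := congr1 (fun w => ipw w (Qop hm A P rho gamma d)) F2; rewrite /= !ipw_subl in F2q. move: F3; rewrite ipw_subl => F3.
lra.
Qed.
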